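(* For $n\ge1$ and $k\ge1$, let $a_{n,k}(\tau)$ denote the number of cyclic permutations $\pi\in\mathfrak S_n$ whose one-line notation avoids $\delta_k=k(k-1)\cdots21$ and whose cycle form $C(\pi)$ avoids $\tau$. Then $a_{n,k}(312)=a_{n,k}(213)$ for all $n\ge1$, $k\ge1$. Consequently the generating functions $f_k(z;312)=\sum_{n\ge1}a_{n,k}(312)z^n$ and $f_k(z;213)=\sum_{n\ge1}a_{n,k}(213)z^n$ are equal.
   Context: A permutation $\pi\in\mathfrak S_n$ is cyclic if it consists of a single $n$-cycle. For cyclic $\pi$, $C(\pi)=(1,c_2,\dots,c_n)$ with $c_2=\pi(1)$, $c_{i+1}=\pi(c_i)$, viewed as the sequence $1c_2\cdots c_n$ for pattern avoidance. A sequence avoids a pattern $\sigma\in\mathfrak S_m$ if no subsequence of length $m$ is in the same relative order as $\sigma$. The one-line notation of $\pi$ is $\pi_1\cdots\pi_n$, $\pi_i=\pi(i)$. *)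

(* Defs.v *)
From mathcomp Require Import all_boot all_order all_fingroup.
Set Implicit Arguments. Unset Strict Implicit. Unset Printing Implicit Defensive.

(* Permutations of [n] are modelled as {perm 'I_n}, i.e. on {0,...,n-1};
   a uniform shift by 1 does not affect relative order of values. *)

Definition same_order (s t : seq nat) : bool :=
  (size s == size t) &&
  [forall i : 'I_(size s), forall j : 'I_(size s),
     (nth 0 s i < nth 0 s j) == (nth 0 t i < nth 0 t j)].

Definition contains (sigma s : seq nat) : bool :=
  [exists m : (size s).-tuple bool, same_order (mask m s) sigma].

Definition avoids (sigma s : seq nat) : bool := ~~ contains sigma s.

Definition one_line n (p : {perm 'I_n}) : seq nat := [seq val (p i) | i <- enum 'I_n].

Definition cyclic_perm n (p : {perm 'I_n}) : bool :=
  [forall i : 'I_n, #|porbit p i| == n].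

Definition cycle_form n (p : {perm 'I_n.+1}) : seq nat :=
  [seq val ((p ^+ i)%g ord0) | i <- iota 0 n.+1].

Definition delta (k : nat) : seq nat := rev (iota 1 k).

(* a_{n+1,k}(tau) : permutations of [n+1] (n+1 >= 1) *)
Definition a_count_S (n k : nat) (tau : seq nat) : nat :=
  #|[set p : {perm 'I_n.+1} | [&& cyclic_perm p, avoids (delta k) (one_line p)
                                & avoids tau (cycle_form p)]]|.

(* Main.v *)
Require Import Defs.
From mathcomp Require Import all_boot all_order all_fingroup.
Set Implicit Arguments. Unset Strict Implicit. Unset Printing Implicit Defensive.

Lemma containsP sigma s :
  reflect (exists u, subseq u s /\ same_order u sigma) (contains sigma s).
Proof.
apply: (iffP existsP) => [[m Hm]|[u [/subseqP [m Hsz ->] Hso]]].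
  by exists (mask m s); rewrite mask_subseq.
have Hsz' : size m == size s by rewrite Hsz.
by exists (Tuple Hsz').
Qed.

Lemma same_orderP s t :
  reflect (size s = size t /\ forall i j, i < size s -> j < size s ->
             (nth 0 s i < nth 0 s j) = (nth 0 t i < nth 0 t j))
          (same_order s t).
Proof.
apply: (iffP andP) => [[/eqP Hs /forallP H]|[Hs H]]; split => //.
- move=> i j Hi Hj; have := H (Ordinal Hi) => /forallP /(_ (Ordinal Hj)) /eqP.
  by [].
- by apply/eqP.
- apply/forallP => i; apply/forallP => j; apply/eqP; exact: H.
Qed.

Lemma same_order_rev s t : same_order s t -> same_order (rev s) (rev t).
Proof.
move/same_orderP => [Hs H]; apply/same_orderP; rewrite !size_rev; split => //.
move=> i j Hi Hj; rewrite !nth_rev -?Hs //.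
apply: H; rewrite ?subnSK // ?leq_subr // -Hs.

Qed.

Lemma contains_rev sigma s : contains sigma s -> contains (rev sigma) (rev s).
Proof.
move/containsP => [u [Hu Ho]]; apply/containsP; exists (rev u); split.
  by rewrite subseq_rev.
exact: same_order_rev.
Qed.

Lemma contains_cons0 sigma t : 1 < size sigma -> nth 0 sigma 1 < nth 0 sigma 0 ->
  contains sigma (0 :: t) = contains sigma t.
Proof.
move=> H2 Hs; apply/containsP/containsP => [[u [Hu Ho]]|[u [Hu Ho]]].
  case: u Hu Ho => [|x u] /= Hu Ho; first by exists [::]; rewrite sub0seq.
  case: ifP Hu => [/eqP Hx Hu|_ Hu]; last by exists (x :: u).
  move/same_orderP: Ho => [Hsz H].
  case: u Hu H Hsz => [|y u] Hu H Hsz.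
    by rewrite -Hsz in H2.
  by move: (H 1 0 isT isT); rewrite /= Hx ltn0 Hs.
exists u; split => //; apply: (subseq_trans Hu); exact: subseq_cons.
Qed.

Lemma nth_delta k i : i < k -> nth 0 (delta k) i = k - i.
Proof.
move=> Hi; rewrite /delta nth_rev size_iota // nth_iota; last first.
  by rewrite subnSK // leq_subr.
by rewrite add1n subnSK.
Qed.

Lemma gtn_trans : transitive gtn.
Proof. move=> a b c /= H1 H2; exact: ltn_trans H2 H1. Qed.

Lemma same_order_delta t k : same_order t (delta k) = (size t == k) && sorted gtn t.
Proof.
have Hsd : size (delta k) = k by rewrite size_rev size_iota.
apply/same_orderP/andP => [[Hs H]|[/eqP Hs Hsort]].
  rewrite Hsd in Hs; split; first by apply/eqP.
  rewrite sorted_pairwise; last exact: gtn_trans.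
  apply/(pairwiseP 0) => i j Hi Hj Hij /=.
  rewrite H // !nth_delta -?Hs //.
  rewrite ltn_sub2l //; exact: leq_ltn_trans Hij _.
rewrite Hsd; split => // i j Hi Hj.
move: Hsort; rewrite sorted_pairwise; last exact: gtn_trans.
move/(pairwiseP 0) => P.
rewrite !nth_delta -?Hs //.
case: (ltngtP i j) => Hij.
- have := P i j Hi Hj Hij => /= Hlt.
  rewrite ltnNge (ltnW Hlt) /=; apply/esym/negbTE; rewrite -leqNgt.
  by apply: leq_sub2l; apply: ltnW.
- have := P j i Hj Hi Hij => /= ->.
  by rewrite ltn_sub2l // -Hs.
- by rewrite Hij !ltnn.
Qed.

Definition dec_witness n (p : {perm 'I_n}) k :=
  exists u : seq 'I_n, [/\ sorted (relpre val ltn) u, size u = k &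
                         sorted (relpre (fun i => val (p i)) gtn) u].

Lemma relpre_ltn_trans n : transitive (relpre (@nat_of_ord n) ltn).
Proof. move=> a b c /=; exact: ltn_trans. Qed.

Lemma sorted_enum_ord n : sorted (relpre (@nat_of_ord n) ltn) (enum 'I_n).
Proof. by rewrite -sorted_map val_enum_ord iota_ltn_sorted. Qed.

Lemma contains_delta_one_line n (p : {perm 'I_n}) k :
  contains (delta k) (one_line p) <-> dec_witness p k.
Proof.
rewrite /one_line; split.
  move/containsP => [t [/subseqP [m Hm ->]]]; rewrite same_order_delta.
  rewrite -map_mask => /andP [/eqP Hs Hsort].
  exists (mask m (enum 'I_n)); split.
  - apply: (subseq_sorted (@relpre_ltn_trans n) (mask_subseq _ _)).
    exact: sorted_enum_ord.
  - by rewrite -Hs size_map.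
  - by rewrite -sorted_map.
move=> [u [Hu Hs Hp]]; apply/containsP.
exists [seq val (p i) | i <- u]; split; last first.
  by rewrite same_order_delta size_map Hs eqxx sorted_map.
have Hun : uniq (enum (ordinal n)) by apply: enum_uniq.
apply: map_subseq; apply/(subseq_uniqP Hun).
apply: (irr_sorted_eq (@relpre_ltn_trans n)) => //.
- by move=> x /=; rewrite ltnn.
- apply: sorted_filter; first exact: relpre_ltn_trans.
  exact: sorted_enum_ord.
- by move=> x; rewrite mem_filter mem_enum andbT.
Qed.

Lemma dec_witness_inv n (p : {perm 'I_n}) k :
  dec_witness p k -> dec_witness p^-1 k.
Proof.
move=> [u [Hu Hs Hp]]; exists (rev (map p u)); split.
- by rewrite rev_sorted sorted_map.
- by rewrite size_rev size_map.
- rewrite rev_sorted sorted_map.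
  rewrite (eq_sorted (e' := relpre val ltn)) //.
  by move=> x y /=; rewrite !permK.
Qed.

Lemma avoids_delta_inv n (p : {perm 'I_n}) k :
  avoids (delta k) (one_line p^-1) = avoids (delta k) (one_line p).
Proof.
rewrite /avoids; congr negb; apply/idP/idP => /contains_delta_one_line H;
  apply/contains_delta_one_line.
  by rewrite -[p]invgK; apply: dec_witness_inv.
exact: dec_witness_inv.
Qed.

Lemma cyclic_iter n (p : {perm 'I_n.+1}) : cyclic_perm p -> (p ^+ n.+1)%g ord0 = ord0.
Proof.
move=> /forallP /(_ ord0) /eqP H; rewrite permX -[in X in iter X]H.
exact: iter_porbit.
Qed.

Lemma cycle_form_head n (p : {perm 'I_n.+1}) :
  cycle_form p = 0 :: behead (cycle_form p).
Proof. by rewrite /cycle_form /= expg0 perm1. Qed.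

Lemma inv_pow n (p : {perm 'I_n.+1}) a b : cyclic_perm p -> a + b = n.+1 ->
  ((p^-1) ^+ a)%g ord0 = (p ^+ b)%g ord0.
Proof.
move=> Hc Hab.
transitivity (((p ^+ a)^-1)%g (((p ^+ a)%g) (((p ^+ b)%g) ord0))).
  have E : (p ^+ a)%g ((p ^+ b)%g ord0) = ord0.
    by rewrite -permM -expgD addnC Hab cyclic_iter.
  by rewrite E expgVn.
by rewrite permK.
Qed.

Lemma cycle_form_inv n (p : {perm 'I_n.+1}) : cyclic_perm p ->
  cycle_form p^-1 = 0 :: rev (behead (cycle_form p)).
Proof.
move=> Hc; rewrite cycle_form_head; congr (_ :: _).
rewrite /cycle_form /=.
apply: (@eq_from_nth _ 0); first by rewrite size_rev !size_map size_iota.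
rewrite size_map size_iota => i Hi.
rewrite nth_rev size_map size_iota // !(nth_map 0) ?size_iota ?subnSK ?leq_subr //.
rewrite !nth_iota ?subnSK ?leq_subr //.
rewrite (@inv_pow _ p (1 + i) (1 + (n - i.+1))) //.
rewrite add1n addSn add1n subnSK // subnKC //; exact: ltnW.
Qed.

Lemma contains_rev_iff sigma s : contains (rev sigma) (rev s) = contains sigma s.
Proof.
apply/idP/idP => H; last exact: contains_rev.
by rewrite -[sigma]revK -[s]revK; apply: contains_rev.
Qed.

Lemma cyclic_inv n (p : {perm 'I_n}) : cyclic_perm p^-1 = cyclic_perm p.
Proof.
by apply/forallP/forallP => H i; move: (H i); rewrite porbitV.
Qed.

Theorem theorem2p10 :
  forall m k : nat, 1 <= k ->
    a_count_S m k [:: 3; 1; 2] = a_count_S m k [:: 2; 1; 3].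
Proof.
move=> m k _; rewrite /a_count_S.
rewrite -(card_preimset _ (@invg_inj (perm_of (ordinal m.+1)))).
apply: eq_card => p; rewrite !inE cyclic_inv avoids_delta_inv.
case Hc: (cyclic_perm p) => //=; congr (_ && _).
rewrite cycle_form_inv // /avoids (cycle_form_head p) contains_cons0 //.
rewrite /= contains_cons0 // -[in RHS]contains_rev_iff.
by [].
Qed.
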